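(* For every integer $k\ge 2$, no graph $G\in\mathcal{H}_k$ contains $K_{2,k+2}$ as a minor.
   Context: All graphs are finite; parallel edges are allowed, loops are not. A length-function on a graph $G$ is a map $\ell:E(G)\to\mathbb{R}^+$ (strictly positive reals); $\ell(H)=\sum_{e\in E(H)}\ell(e)$ for subgraphs $H$, which carry the restricted length-function. $\mathrm{sd}_G(A)$ is the minimum of $\ell(S)$ over connected subgraphs $S\subseteq G$ with $A\subseteq V(S)$ ($\infty$ if none). $H\subseteq G$ is $k$-geodesic in $G$ if $\mathrm{sd}_H(A)=\mathrm{sd}_G(A)$ for all $A\subseteq V(H)$ with $|A|\le k$, and fully geodesic if it is $k$-geodesic for all $k$. For $k\ge2$, $\mathcal{H}_k$ is the class of all graphs $H$ such that for every graph $G\supseteq H$ and every length-function on $G$ for which $H$ is $k$-geodesic in $G$, $H$ is fully geodesic in $G$. *)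

(* Defs.v *)
From mathcomp Require Import all_boot.
From Stdlib Require Import Reals.
Set Implicit Arguments. Unset Strict Implicit. Unset Printing Implicit Defensive.

(* A finite multigraph: vertices 'I_(nv G); edges form a list of endpoint pairs,
   edge number i being the i-th entry (so parallel edges are allowed).
   Loops are excluded by the predicate [loopless]. Edges are undirected: the
   order of the two endpoints in a pair is irrelevant everywhere below. *)
Record graph := Graph { nv : nat; edges : seq ('I_nv * 'I_nv) }.

Definition eidx (G : graph) := 'I_(size (edges G)).

Definition edge_at (G : graph) (e : eidx G) : 'I_(nv G) * 'I_(nv G) :=
  tnth (in_tuple (edges G)) e.

Definition loopless (G : graph) : bool := all (fun p => p.1 != p.2) (edges G).

Definition is_subgraph (G : graph) (VS : {set 'I_(nv G)}) (ES : {set eidx G}) : bool :=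
  [forall e in ES, ((edge_at e).1 \in VS) && ((edge_at e).2 \in VS)].

Definition sub_adj (G : graph) (ES : {set eidx G}) : rel 'I_(nv G) :=
  fun x y => [exists e in ES, (edge_at e == (x, y)) || (edge_at e == (y, x))].

Definition connectedb (G : graph) (VS : {set 'I_(nv G)}) (ES : {set eidx G}) : bool :=
  (VS != set0) && [forall x in VS, forall y in VS, connect (sub_adj ES) x y].

Definition sub_len (G : graph) (l : eidx G -> R) (ES : {set eidx G}) : R :=
  \big[Rplus/0%R]_(e in ES) l e.

(* sd_G(A): minimum length of a connected subgraph containing A;
   None encodes +infinity (no such subgraph). *)
Definition sd (G : graph) (l : eidx G -> R) (A : {set 'I_(nv G)}) : option R :=
  foldr (fun (S : {set 'I_(nv G)} * {set eidx G}) acc =>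
           if [&& is_subgraph S.1 S.2, connectedb S.1 S.2 & A \subset S.1]
           then Some (match acc with
                      | None => sub_len l S.2
                      | Some d => Rmin (sub_len l S.2) d end)
           else acc)
        None (enum [set: {set 'I_(nv G)} * {set eidx G}]).

(* H is a subgraph of G, presented as an embedding (injective on vertices and
   on edges, preserving incidence). *)
Record embedding (H G : graph) := Embedding {
  vmap : 'I_(nv H) -> 'I_(nv G);
  emap : eidx H -> eidx G;
  vmap_inj : injective vmap;
  emap_inj : injective emap;
  emap_ends : forall e : eidx H,
    edge_at (emap e) = (vmap (edge_at e).1, vmap (edge_at e).2) \/
    edge_at (emap e) = (vmap (edge_at e).2, vmap (edge_at e).1) }.

Definition k_geodesic (H G : graph) (phi : embedding H G) (l : eidx G -> R) (k : nat) : Prop :=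
  forall A : {set 'I_(nv H)}, #|A| <= k ->
    sd (fun e => l (emap phi e)) A = sd l (vmap phi @: A).

Definition fully_geodesic (H G : graph) (phi : embedding H G) (l : eidx G -> R) : Prop :=
  forall k : nat, k_geodesic phi l k.

Definition in_Hk (k : nat) (H : graph) : Prop :=
  forall (G : graph) (phi : embedding H G) (l : eidx G -> R),
    loopless G -> (forall e, (0 < l e)%R) ->
    k_geodesic phi l k -> fully_geodesic phi l.

(* X (a simple graph on a finType given by a symmetric relation) is a minor of H:
   there are pairwise disjoint, nonempty, connected branch sets B x (x in X)
   and, for each edge xy of X, an edge of H between B x and B y. *)
Definition induced_edges (G : graph) (B : {set 'I_(nv G)}) : {set eidx G} :=
  [set e : eidx G | ((edge_at e).1 \in B) && ((edge_at e).2 \in B)].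

Definition has_minor (X : finType) (adj : rel X) (H : graph) : Prop :=
  exists B : X -> {set 'I_(nv H)},
    (forall x, connectedb (B x) (induced_edges (B x))) /\
    (forall x y, x != y -> [disjoint B x & B y]) /\
    (forall x y, adj x y -> exists e : eidx H,
        ((edge_at e).1 \in B x /\ (edge_at e).2 \in B y) \/
        ((edge_at e).1 \in B y /\ (edge_at e).2 \in B x)).

Definition K2_adj (m : nat) : rel ('I_2 + 'I_m)%type :=
  fun u v => match u, v with
             | inl _, inr _ | inr _, inl _ => true
             | _, _ => false end.

(* Main.v *)
From HB Require Import structures.
Require Import Defs.
From mathcomp Require Import all_boot.
From Stdlib Require Import Reals Lra Lia Classical.
From mathcomp Require Import zify.
Set Implicit Arguments. Unset Strict Implicit. Unset Printing Implicit Defensive.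

HB.instance Definition _ := Monoid.isComLaw.Build R 0%R Rplus
  (fun x y z => esym (Rplus_assoc x y z)) Rplus_comm Rplus_0_l.

Section Sums.
Variable I : finType.
Implicit Types (A B : {set I}) (F : I -> R).

Lemma sumR_ge0 (P : pred I) F :
  (forall i, P i -> 0 <= F i)%R -> (0 <= \big[Rplus/0%R]_(i | P i) F i)%R.
Proof. move=> H; apply: (big_ind (fun x => 0 <= x)%R) => //; [lra| move=> *; lra]. Qed.

Lemma sumR_sub A B F : A \subset B -> (forall i, 0 <= F i)%R ->
  (\big[Rplus/0%R]_(i in A) F i <= \big[Rplus/0%R]_(i in B) F i)%R.
Proof.
move=> sAB F0; rewrite (@big_setID _ _ _ _ B A) /=.
have -> : B :&: A = A by apply/setIidPr.
have := @sumR_ge0 (fun i => i \in B :\: A) F (fun i _ => F0 i). lra.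
Qed.

Lemma sumR_union A B F : (forall i, 0 <= F i)%R ->
  (\big[Rplus/0%R]_(i in A :|: B) F i <=
   \big[Rplus/0%R]_(i in A) F i + \big[Rplus/0%R]_(i in B) F i)%R.
Proof.
move=> F0; rewrite (@big_setID _ _ _ _ (A :|: B) A) /=.
have -> : (A :|: B) :&: A = A by apply/setIidPr; apply: subsetUl.
have : (A :|: B) :\: A \subset B.
  by apply/subsetP=> x; rewrite !inE; case: (x \in A); case: (x \in B).
move/sumR_sub=> /(_ F F0); lra.
Qed.

Lemma sumR_disj A B F : [disjoint A & B] ->
  \big[Rplus/0%R]_(i in A :|: B) F i =
   (\big[Rplus/0%R]_(i in A) F i + \big[Rplus/0%R]_(i in B) F i)%R.
Proof.
move=> dAB; rewrite (@big_setID _ _ _ _ (A :|: B) A) /=.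
have -> : (A :|: B) :&: A = A by apply/setIidPr; apply: subsetUl.
congr (_ + _)%R; apply: eq_bigl => x; rewrite !inE.
case Ax: (x \in A) => //=; case Bx: (x \in B) => //.
by move: dAB; rewrite disjoint_subset => /subsetP /(_ x Ax); rewrite inE Bx.
Qed.

Lemma sumR_const (P : pred I) c :
  \big[Rplus/0%R]_(i in P) c = (INR #|P| * c)%R.
Proof.
rewrite big_const; elim: #|P| => [|n IH]; first by rewrite /=; lra.
rewrite iterS IH S_INR; lra.
Qed.

Lemma sumR_le (P : pred I) F1 F2 : (forall i, P i -> F1 i <= F2 i)%R ->
  (\big[Rplus/0%R]_(i | P i) F1 i <= \big[Rplus/0%R]_(i | P i) F2 i)%R.
Proof.
move=> H; apply: (big_ind2 (fun x y => x <= y)%R) => //; [lra | move=> *; lra].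
Qed.

Lemma sumR_elem A F i : i \in A -> (forall i, 0 <= F i)%R ->
  (F i <= \big[Rplus/0%R]_(j in A) F j)%R.
Proof.
move=> Ai F0; rewrite (big_setD1 _ Ai) /=.
have := @sumR_ge0 (fun j => j \in A :\ i) F (fun j _ => F0 j); lra.
Qed.

End Sums.

Definition validS (G : graph) (A : {set 'I_(nv G)}) (S : {set 'I_(nv G)} * {set eidx G}) :=
  [&& is_subgraph S.1 S.2, connectedb S.1 S.2 & A \subset S.1].

Definition sd_step (G : graph) (l : eidx G -> R) (A : {set 'I_(nv G)})
  (S : {set 'I_(nv G)} * {set eidx G}) (acc : option R) :=
  if [&& is_subgraph S.1 S.2, connectedb S.1 S.2 & A \subset S.1]
  then Some (match acc with
             | None => sub_len l S.2
             | Some d => Rmin (sub_len l S.2) d end)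
  else acc.

Lemma sdE (G : graph) (l : eidx G -> R) A :
  sd l A = foldr (sd_step l A) None (enum [set: {set 'I_(nv G)} * {set eidx G}]).
Proof. by []. Qed.

Lemma sd_foldr (G : graph) (l : eidx G -> R) (A : {set 'I_(nv G)}) s :
  (forall S, S \in s -> validS A S -> exists d, foldr (sd_step l A) None s = Some d /\ (d <= sub_len l S.2)%R) /\
  (forall d, foldr (sd_step l A) None s = Some d -> exists S, validS A S /\ d = sub_len l S.2).
Proof.
elim: s => [|S s [IH1 IH2]] /=; first by split=> // d.
move: IH1 IH2; set f := foldr (sd_step l A) None s => IH1 IH2.
rewrite /sd_step -/f.
rewrite /validS in IH1 IH2 *.
case V: [&& _, _ & _].
  split.
    move=> S'; rewrite inE => /orP [/eqP -> _ | S's VS'].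
      case Ef: f => [d|]; eexists; split; try reflexivity.
      all: try by apply: Rmin_l.
    have [d [E Hd]] := IH1 S' S's VS'.
    rewrite E; eexists; split; first reflexivity.
    apply: Rle_trans (Rmin_r _ _) Hd.
  move=> d [<-]; case E: f => [d'|].
    rewrite /Rmin; case: Rle_dec => _; first by exists S.
    by apply: IH2.
  by exists S.
split; last exact: IH2.
move=> S'; rewrite inE => /orP [/eqP -> | S's VS']; first by rewrite V.
exact: IH1.
Qed.

Lemma sd_le (G : graph) (l : eidx G -> R) A S : validS A S ->
  exists d, sd l A = Some d /\ (d <= sub_len l S.2)%R.
Proof.
move=> VS; rewrite sdE; have [H1 _] := sd_foldr l A (enum [set: {set 'I_(nv G)} * {set eidx G}]).
by apply: H1 => //; rewrite mem_enum inE.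
Qed.

Lemma sd_attained (G : graph) (l : eidx G -> R) A d : sd l A = Some d ->
  exists S, validS A S /\ d = sub_len l S.2.
Proof.
rewrite sdE; have [_ H2] := sd_foldr l A (enum [set: {set 'I_(nv G)} * {set eidx G}]).
exact: H2.
Qed.

Lemma sd_eq (G1 G2 : graph) (l1 : eidx G1 -> R) (l2 : eidx G2 -> R) A1 A2 :
  (forall S1, validS A1 S1 -> exists S2, validS A2 S2 /\ (sub_len l2 S2.2 <= sub_len l1 S1.2)%R) ->
  (forall S2, validS A2 S2 -> exists S1, validS A1 S1 /\ (sub_len l1 S1.2 <= sub_len l2 S2.2)%R) ->
  sd l1 A1 = sd l2 A2.
Proof.
move=> H12 H21.
case E1: (sd l1 A1) => [d1|]; case E2: (sd l2 A2) => [d2|] //.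
- have [S1 [V1 D1]] := sd_attained E1.
  have [S2 [V2 D2]] := sd_attained E2.
  have [S2' [V2' L2']] := H12 _ V1.
  have [S1' [V1' L1']] := H21 _ V2.
  have [e1 [E1' le1]] := sd_le l1 V1'.
  have [e2 [E2' le2]] := sd_le l2 V2'.
  move: E1' E2'; rewrite E1 E2 => -[Ed1] [Ed2].
  rewrite -Ed1 in le1; rewrite -Ed2 in le2.
  congr Some; lra.
- have [S1 [V1 _]] := sd_attained E1.
  have [S2 [V2 _]] := H12 _ V1.
  by have [d [E _]] := sd_le l2 V2; rewrite E in E2.
- have [S2 [V2 _]] := sd_attained E2.
  have [S1 [V1 _]] := H21 _ V2.
  by have [d [E _]] := sd_le l1 V1; rewrite E in E1.
Qed.
Section Conn.
Variable G : graph.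
Implicit Types (ES : {set eidx G}) (VS U : {set 'I_(nv G)}).

Lemma sub_adjP ES x y :
  reflect (exists2 e, e \in ES & edge_at e = (x, y) \/ edge_at e = (y, x)) (sub_adj ES x y).
Proof.
apply: (iffP existsP) => [[e /andP [eE /orP [/eqP E | /eqP E]]] | [e eE [E|E]]].
- by exists e => //; left.
- by exists e => //; right.
- by exists e; rewrite eE E eqxx.
- by exists e; rewrite eE E eqxx orbT.
Qed.

Lemma sub_adj_sym ES : symmetric (sub_adj ES).
Proof.
move=> x y; apply/sub_adjP/sub_adjP => [] [e eE H]; exists e => //; tauto.
Qed.

Lemma connect_symE ES x y : connect (sub_adj ES) x y = connect (sub_adj ES) y x.
Proof. by apply: sym_connect_sym; apply: sub_adj_sym. Qed.

Lemma connect_mono ES1 ES2 x y : ES1 \subset ES2 ->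
  connect (sub_adj ES1) x y -> connect (sub_adj ES2) x y.
Proof.
move=> sE; apply: connect_sub => a b /sub_adjP [e eE H]; apply: connect1.
by apply/sub_adjP; exists e => //; apply: (subsetP sE).
Qed.

Lemma cut_edge ES U u v : connect (sub_adj ES) u v -> u \in U -> v \notin U ->
  exists2 e, e \in ES & ((edge_at e).1 \in U) != ((edge_at e).2 \in U).
Proof.
move=> /connectP [p pP ->]; elim: p u pP => [|y p IH] u /=.
  by move=> _ uU; rewrite uU.
move=> /andP [uy pP] uU vU.
case yU: (y \in U); first exact: (IH y pP yU vU).
case/sub_adjP: uy => e eE [E|E]; exists e => //; rewrite E /= ?uU ?yU //.
Qed.

Lemma component_valid VS ES v0 : is_subgraph VS ES -> v0 \in VS ->
  let V' := [set x in VS | connect (sub_adj ES) v0 x] in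
  let E' := [set e in ES | ((edge_at e).1 \in V') && ((edge_at e).2 \in V')] in
  is_subgraph V' E' /\ connectedb V' E' /\ v0 \in V'.
Proof.
move=> sub v0V V' E'.
have v0V' : v0 \in V' by rewrite inE v0V connect0.
have key0 : forall p x, connect (sub_adj ES) v0 x -> connect (sub_adj E') v0 x ->
    path (sub_adj ES) x p -> connect (sub_adj E') v0 (last x p).
  elim => [|z p IH] x cx cx' //=.
  move=> /andP [xz pP].
  have cz : connect (sub_adj ES) v0 z by apply: connect_trans cx (connect1 xz).
  apply: IH pP => //; apply: connect_trans cx' (connect1 _).
  case/sub_adjP: xz => e eE H; apply/sub_adjP; exists e => //.
  move/forallP: sub => /(_ e); rewrite eE /= => /andP [e1 e2].
  rewrite inE eE /= !inE e1 e2 /=.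
  by case: H => ->; rewrite /= ?cx ?cz.
have key : forall y, connect (sub_adj ES) v0 y -> connect (sub_adj E') v0 y.
  move=> y /connectP [p pP ->]; apply: key0 => //; exact: connect0.
split.
  apply/forallP => e; apply/implyP; rewrite inE => /andP [_ ->] //.
split=> //; apply/andP; split; first by apply/set0Pn; exists v0.
apply/forallP => x; apply/implyP => xV; apply/forallP => y; apply/implyP => yV.
apply: (@connect_trans _ _ v0).
  rewrite connect_symE; apply: key; move: xV; rewrite inE => /andP [].
  by [].
by apply: key; move: yV; rewrite inE => /andP [].
Qed.

End Conn.

Lemma connect_homo (G1 G2 : graph) (f : 'I_(nv G1) -> 'I_(nv G2))
  (E1 : {set eidx G1}) (E2 : {set eidx G2}) x y :
  (forall a b, sub_adj E1 a b -> sub_adj E2 (f a) (f b)) ->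
  connect (sub_adj E1) x y -> connect (sub_adj E2) (f x) (f y).
Proof.
move=> Hf /connectP [p pP ->]; elim: p x pP => [|z p IH] x /=.
  by move=> _; apply: connect0.
move=> /andP [xz pP]; apply: connect_trans (connect1 (Hf _ _ xz)) (IH _ pP).
Qed.

Definition link (G : graph) (X Y : {set 'I_(nv G)}) (e : eidx G) :=
  ((edge_at e).1 \in X) && ((edge_at e).2 \in Y) || ((edge_at e).1 \in Y) && ((edge_at e).2 \in X).

Lemma leaf_le k : k + 1 <= k + 2. Proof. by rewrite leq_add2l. Qed.

Lemma k1_pos k : 0 < k + 1. Proof. by rewrite addn1. Qed.

Section Constr.
Variables (k : nat) (H : graph).
Hypothesis k2 : 2 <= k.
Hypothesis Hloop : loopless H.
Variable B : ('I_2 + 'I_(k+2))%type -> {set 'I_(nv H)}.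
Hypothesis Bconn : forall x, connectedb (B x) (induced_edges (B x)).
Hypothesis Bdisj : forall x y, x != y -> [disjoint B x & B y].
Definition leaf (i : 'I_(k+1)) : ('I_2 + 'I_(k+2))%type := inr (widen_ord (leaf_le k) i).
Definition h0 : 'I_2 := ord0.
Definition o0 : 'I_(k+1) := Ordinal (k1_pos k).
Definition h1 : 'I_2 := ord_max.
Variable c : 'I_2 -> 'I_(k+1) -> eidx H.
Hypothesis Hc : forall h i, link (B (inl h)) (B (leaf i)) (c h i).
Variable t : 'I_(k+1) -> 'I_(nv H).
Hypothesis Ht : forall i, t i \in B (leaf i).

Lemma leaf_inj : injective leaf.
Proof. move=> i j E; injection E => E2; exact: val_inj E2. Qed.

Lemma memB_uniq v x y : v \in B x -> v \in B y -> x = y.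
Proof.
move=> vx vy; apply/eqP; apply/negPn/negP => /Bdisj.
by rewrite disjoint_subset => /subsetP /(_ v vx); rewrite inE vy.
Qed.

Lemma link_uniq x y x' y' e : link (B x) (B y) e -> link (B x') (B y') e ->
  (x = x' /\ y = y') \/ (x = y' /\ y = x').
Proof.
rewrite /link => /orP [] /andP [a b] /orP [] /andP [a' b'].
- by left; split; apply: memB_uniq; eauto.
- by right; split; apply: memB_uniq; eauto.
- by right; split; apply: memB_uniq; eauto.
- by left; split; apply: memB_uniq; eauto.
Qed.

Lemma c_inj h i h' j : c h i = c h' j -> h = h' /\ i = j.
Proof.
move=> E; have := Hc h' j; rewrite -E => /(link_uniq (Hc h i)) [[E1 E2] | [] //].
by case: E1 => ->; rewrite (leaf_inj E2).
Qed.

Lemma c_not_int h i x : c h i \notin induced_edges (B x).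
Proof.
apply/negP; rewrite inE => /andP [a b].
case/orP: (Hc h i) => /andP [a' b'].
- by have := memB_uniq a a'; have := memB_uniq b b' => -> .
- by have := memB_uniq a a'; have := memB_uniq b b' => -> .
Qed.

Definition KR := INR k.
Definition rr (i : 'I_(k+1)) : R := if i == o0 then (2 * KR)%R else (3 * KR + 1)%R.
Definition delta : R := (/ (INR #|eidx H| + 1))%R.
Definition Mb : R := (3 * KR * KR + 3 * KR + 1)%R.
Definition lH (e : eidx H) : R :=
  if e == c h0 o0 then 1%R
  else if [exists i, (i != o0) && (e == c h0 i)] then (3 * KR + 3)%R
  else if [exists i, (i != o0) && (e == c h1 i)] then (3 * KR)%R
  else if [exists x, e \in induced_edges (B x)] then delta
  else Mb.

Lemma KR2 : (2 <= KR)%R.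
Proof. by rewrite /KR; apply: (le_INR 2); apply/leP. Qed.

Lemma delta_pos : (0 < delta)%R.
Proof. rewrite /delta; apply: Rinv_0_lt_compat; have := pos_INR #|eidx H|; lra. Qed.

Lemma lH_c00 : lH (c h0 o0) = 1%R.
Proof. by rewrite /lH eqxx. Qed.

Lemma lH_c0 i : i != o0 -> lH (c h0 i) = (3 * KR + 3)%R.
Proof.
move=> i0; rewrite /lH.
case: eqP => [/c_inj [_ E] | _]; first by rewrite E eqxx in i0.
by case: existsP => // [[]]; exists i; rewrite i0 eqxx.
Qed.

Lemma lH_c1 i : i != o0 -> lH (c h1 i) = (3 * KR)%R.
Proof.
move=> i0; rewrite /lH.
case: eqP => [/c_inj [] //|_].
case: existsP => [[j /andP [_ /eqP /c_inj []]] //|_].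
by case: existsP => // [[]]; exists i; rewrite i0 eqxx.
Qed.

Lemma lH_int x e : e \in induced_edges (B x) -> lH e = delta.
Proof.
move=> ex; rewrite /lH.
case: eqP => [E|_]; first by have := c_not_int h0 o0 x; rewrite -E ex.
case: existsP => [[j /andP [_ /eqP E]]|_]; first by have := c_not_int h0 j x; rewrite -E ex.
case: existsP => [[j /andP [_ /eqP E]]|_]; first by have := c_not_int h1 j x; rewrite -E ex.
by case: existsP => // [[]]; exists x.
Qed.

Lemma lH_cases e : lH e = Mb \/ e = c h0 o0 \/ (exists2 i, i != o0 & e = c h0 i) \/
  (exists2 i, i != o0 & e = c h1 i) \/ (exists x, e \in induced_edges (B x)).
Proof.
rewrite /lH; case: eqP => [E|_]; first by tauto.
case: existsP => [[j /andP [j0 /eqP E]]|_]; first by do 2 right; left; exists j.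
case: existsP => [[j /andP [j0 /eqP E]]|_]; first by do 3 right; left; exists j.
case: existsP => [[x ex]|_]; first by do 4 right; exists x.
by left.
Qed.

Lemma lH_pos e : (0 < lH e)%R.
Proof.
have := KR2; have := delta_pos; rewrite /lH /Mb => d K.
case: ifP => _; first lra. case: ifP => _; first lra. case: ifP => _; first lra.
case: ifP => _; first lra. nra.
Qed.

Lemma lH_ge0 e : (0 <= lH e)%R.
Proof. by have := lH_pos e; lra. Qed.


Lemma small_lt1 m n : m <= n -> (INR m * / (INR n + 1) < 1)%R.
Proof.
move=> /leP /le_INR mn; have n0 := pos_INR n.
apply: (Rmult_lt_reg_r (INR n + 1)); first lra.
rewrite Rmult_assoc Rinv_l; lra.
Qed.

Lemma rr_ne0 i : i != o0 -> rr i = (3 * KR + 1)%R.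
Proof. by rewrite /rr => /negbTE ->. Qed.

Lemma hubP h : exists w, w \in B (inl h).
Proof. by have /andP [/set0Pn [w wB] _] := Bconn (inl h); exists w. Qed.

Lemma conn_in x u v : u \in B x -> v \in B x -> connect (sub_adj (induced_edges (B x))) u v.
Proof.
move=> uB vB; have /andP [_ /forallP /(_ u) /implyP /(_ uB) /forallP /(_ v) /implyP /(_ vB)] := Bconn x.
by [].
Qed.

Lemma upper (T : {set 'I_(k+1)}) : T != set0 -> #|T| <= k ->
  exists S, validS (t @: T) S /\ (sub_len lH S.2 <= \big[Rplus/0%R]_(i in T) rr i)%R.
Proof.
move=> T0 Tk.
pose h := if o0 \in T then h0 else h1.
pose Xs := inl h |: (leaf @: T).
pose VQ := \bigcup_(x in Xs) B x.
pose Int := \bigcup_(x in Xs) induced_edges (B x).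
pose Conn := c h @: T.
have inVQ : forall v x, v \in B x -> x \in Xs -> v \in VQ.
  by move=> v x vx xX; apply/bigcupP; exists x.
have hX : inl h \in Xs by rewrite !inE eqxx.
have lX : forall i, i \in T -> leaf i \in Xs.
  by move=> i iT; rewrite !inE; apply/orP; right; apply: imset_f.
have [w0 w0B] := hubP h.
have IntE : Int \subset Int :|: Conn by apply: subsetUl.
have cw0 : forall v, v \in VQ -> connect (sub_adj (Int :|: Conn)) w0 v.
  move=> v /bigcupP [x xX vx].
  have intmono : forall y a b, y \in Xs -> a \in B y -> b \in B y ->
      connect (sub_adj (Int :|: Conn)) a b.
    move=> y a b yX aB bB; apply: connect_mono (conn_in aB bB).
    apply/subsetP => e ee; rewrite inE; apply/orP; left; apply/bigcupP; by exists y.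
  move: xX; rewrite !inE => /orP [/eqP xe | /imsetP [i iT xe]].
    by subst x; apply: intmono hX w0B vx.
  subst x.
  have cT : c h i \in Int :|: Conn by rewrite inE; apply/orP; right; apply: imset_f.
  have := Hc h i; rewrite /link => /orP [] /andP [a b].
  - apply: connect_trans (intmono _ _ _ hX w0B a) _.
    apply: connect_trans (connect1 _) (intmono _ _ _ (lX _ iT) b vx).
    apply/sub_adjP; exists (c h i) => //; left; by case: (edge_at _).
  - apply: connect_trans (intmono _ _ _ hX w0B b) _.
    apply: connect_trans (connect1 _) (intmono _ _ _ (lX _ iT) a vx).
    apply/sub_adjP; exists (c h i) => //; right; by case: (edge_at _).
exists (VQ, Int :|: Conn); split.
  apply/and3P; split => /=.
  - apply/forallP => e; apply/implyP; rewrite inE => /orP [/bigcupP [x xX] | /imsetP [i iT ->]].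
      by rewrite inE => /andP [a b]; rewrite (inVQ _ _ a xX) (inVQ _ _ b xX).
    have := Hc h i; rewrite /link => /orP [] /andP [a b].
      by rewrite (inVQ _ _ a hX) (inVQ _ _ b (lX _ iT)).
    by rewrite (inVQ _ _ b hX) (inVQ _ _ a (lX _ iT)).
  - apply/andP; split; first by apply/set0Pn; exists w0; apply: inVQ w0B hX.
    apply/forallP => x; apply/implyP => xV; apply/forallP => y; apply/implyP => yV.
    apply: (@connect_trans _ _ w0); last exact: cw0.
    by rewrite connect_symE; apply: cw0.
  - apply/subsetP => v /imsetP [i iT ->]; exact: inVQ (Ht i) (lX _ iT).
rewrite /sub_len /=.
apply: Rle_trans (sumR_union _ _ lH_ge0) _.
have Iint : (\big[Rplus/0%R]_(e in Int) lH e < 1)%R.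
  rewrite (eq_bigr (fun _ => delta)); last first.
    by move=> e /bigcupP [x _ ex]; apply: lH_int ex.
  rewrite sumR_const /delta; apply: small_lt1; exact: max_card.
have cinj : {in T &, injective (c h)} by move=> i j _ _ /c_inj [].
rewrite (big_imset _ cinj) /=.
apply: Rle_trans (Rplus_le_compat_r _ _ _ (Rlt_le _ _ Iint)) _.
have cardD := cardsD1 o0 T.
rewrite /h; case: ifP => o0T.
  rewrite o0T in cardD.
  rewrite (big_setD1 _ o0T) (@big_setD1 _ _ _ _ _ _ rr o0T) /= lH_c00.
  have E1 : \big[Rplus/0%R]_(i in T :\ o0) lH (c h0 i) = (INR #|T :\ o0| * (3 * KR + 3))%R.
    rewrite -sumR_const; apply: eq_bigr => i; rewrite !inE => /andP [i0 _]; exact: lH_c0.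
  have E2 : \big[Rplus/0%R]_(i in T :\ o0) rr i = (INR #|T :\ o0| * (3 * KR + 1))%R.
    rewrite -sumR_const; apply: eq_bigr => i; rewrite !inE => /andP [i0 _]; exact: rr_ne0.
  rewrite E1 E2 {1}/rr eqxx.
  have : (INR #|T :\ o0| + 1 <= KR)%R.
    rewrite /KR -S_INR; apply: le_INR; apply/leP; rewrite -addn1 addnC.
    by move: Tk; rewrite cardD.
  have := pos_INR #|T :\ o0|; move=> *; lra.
have E1 : \big[Rplus/0%R]_(i in T) lH (c h1 i) = (INR #|T| * (3 * KR))%R.
  rewrite -sumR_const; apply: eq_bigr => i iT; apply: lH_c1.
  by apply/eqP => E; rewrite -E iT in o0T.
have E2 : \big[Rplus/0%R]_(i in T) rr i = (INR #|T| * (3 * KR + 1))%R.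
  rewrite -sumR_const; apply: eq_bigr => i iT; apply: rr_ne0.
  by apply/eqP => E; rewrite -E iT in o0T.
rewrite E1 E2.
have : (1 <= INR #|T|)%R.
  apply: (le_INR 1); apply/leP; by rewrite card_gt0.
lra.
Qed.


Lemma o1_lt : 1 < k + 1. Proof. by rewrite addn1 ltnS; apply: ltnW. Qed.
Definition o1 : 'I_(k+1) := Ordinal o1_lt.

Lemma int_link x e : e \in induced_edges (B x) -> link (B x) (B x) e.
Proof. by rewrite inE /link => ->. Qed.

Lemma inl_leaf h i : inl h <> leaf i. Proof. by []. Qed.
Lemma neqF (b : bool) : (b != false) = b. Proof. by case: b. Qed.
Lemma Fneq (b : bool) : (false != b) = b. Proof. by case: b. Qed.
Lemma inl_leafE h i : (inl h == leaf i) = false. Proof. by []. Qed.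
Lemma leaf_inlE h i : (leaf i == inl h) = false. Proof. by []. Qed.
Lemma leafE i j : (leaf i == leaf j) = (i == j).
Proof. by apply/eqP/eqP => [/leaf_inj | ->]. Qed.

Lemma cross_link (Xs : {set ('I_2 + 'I_(k+2))%type}) x y e :
  link (B x) (B y) e ->
  ((edge_at e).1 \in \bigcup_(z in Xs) B z) != ((edge_at e).2 \in \bigcup_(z in Xs) B z) ->
  (x \in Xs) != (y \in Xs).
Proof.
have memU : forall v z, v \in B z -> (v \in \bigcup_(w in Xs) B w) = (z \in Xs).
  move=> v z vz; apply/bigcupP/idP => [[w wX vw] | zX]; last by exists z.
  by rewrite (memB_uniq vz vw).
by rewrite /link => /orP [] /andP [a b]; rewrite (memU _ _ a) (memU _ _ b) // eq_sym.
Qed.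

Lemma lower S : validS (t @: setT) S -> (Mb <= sub_len lH S.2)%R.
Proof.
case: S => VS ES /and3P [sub conn At] /=.
have tV : forall i, t i \in VS by move=> i; apply: (subsetP At); apply: imset_f.
have cV : forall x y, x \in VS -> y \in VS -> connect (sub_adj ES) x y.
  move=> x y xV yV; move: conn => /andP [_ /forallP /(_ x) /implyP /(_ xV) /forallP /(_ y) /implyP /(_ yV)].
  by [].
case: (classic (exists2 e, e \in ES & lH e = Mb)) => [[e eE le] | noM].
  by rewrite /sub_len -le; apply: sumR_elem eE lH_ge0.
have cheap : forall e, e \in ES -> lH e <> Mb.
  by move=> e eE le; apply: noM; exists e.
have elink : forall e, e \in ES -> exists x y, link (B x) (B y) e /\
   (e = c h0 o0 \/ (exists2 i, i != o0 & e = c h0 i) \/ (exists2 i, i != o0 & e = c h1 i) \/ x = y).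
  move=> e eE; case: (lH_cases e) => [/(cheap _ eE) //| [E | [[i i0 E] | [[i i0 E] | [x ex]]]]].
  - by exists (inl h0), (leaf o0); split; [rewrite E; apply: Hc | left].
  - by exists (inl h0), (leaf i); split; [rewrite E; apply: Hc | right; left; exists i].
  - by exists (inl h1), (leaf i); split; [rewrite E; apply: Hc | right; right; left; exists i].
  - by exists x, x; split; [apply: int_link | right; right; right].
have exP : forall i, exists e, (e \in ES) && ((e == c h0 i) || ((i != o0) && (e == c h1 i))).
  move=> i.
  pose j := if i == o0 then o1 else o0.
  have ji : j != i.
    by rewrite /j; case: (eqVneq i o0) => [-> // | ine]; rewrite eq_sym.
  have tj : t j \notin \bigcup_(z in [set leaf i]) B z.
    apply/negP => /bigcupP [z]; rewrite inE => /eqP -> tji.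
    by move/eqP: ji; apply; apply: leaf_inj; apply: memB_uniq (Ht j) tji.
  have ti : t i \in \bigcup_(z in [set leaf i]) B z by apply/bigcupP; exists (leaf i); rewrite ?inE.
  have [e eE cr] := cut_edge (cV _ _ (tV i) (tV j)) ti tj.
  exists e; rewrite eE /=.
  have [x [y [lk kind]]] := elink e eE.
  have := cross_link lk cr; rewrite !inE.
  case: kind => [E | [[i' i0 E] | [[i' i0 E] | E]]]; last by rewrite E eqxx.
  - subst e; have [[-> ->]|[-> ->]] := link_uniq lk (Hc h0 o0);
      rewrite ?inl_leafE ?leaf_inlE leafE ?neqF ?Fneq => /eqP ->; by rewrite eqxx.
  - subst e; have [[-> ->]|[-> ->]] := link_uniq lk (Hc h0 i');
      rewrite ?inl_leafE ?leaf_inlE leafE ?neqF ?Fneq => /eqP ->; by rewrite eqxx.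
  - subst e; have [[-> ->]|[-> ->]] := link_uniq lk (Hc h1 i');
      rewrite ?inl_leafE ?leaf_inlE leafE ?neqF ?Fneq => /eqP Ei; subst i'; by rewrite eqxx i0 orbT.
pose g i := xchoose (exP i).
have gP : forall i, (g i \in ES) && ((g i == c h0 i) || ((i != o0) && (g i == c h1 i))).
  by move=> i; exact: (xchooseP (exP i)).
have g0 : g o0 = c h0 o0.
  by move: (gP o0) => /andP [_ /orP [/eqP // | /andP []]]; rewrite eqxx.
have c00 : c h0 o0 \in ES by rewrite -g0; case/andP: (gP o0).
have Kge := KR2.
have cardk : #|[set: 'I_(k+1)] :\ o0| = k.
  have := cardsD1 o0 [set: 'I_(k+1)]; rewrite cardsT card_ord inE /= => E; apply/eqP; rewrite -(eqn_add2l 1) -E; by rewrite addnC.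
have Ik : INR k = INR #|[set: 'I_(k+1)] :\ o0| by rewrite cardk.
have gebound : forall (f : 'I_(k+1) -> eidx H),
    (forall i, (f i == c h0 i) || (f i == c h1 i)) -> f o0 = c h0 o0 ->
    (1 + INR k * (3 * KR) <= \big[Rplus/0%R]_(i in [set: 'I_(k+1)]) lH (f i))%R.
  move=> f fP f0.
  rewrite (big_setD1 _ (in_setT o0)) /= f0 lH_c00.
  apply: Rplus_le_compat_l.
  rewrite Ik -sumR_const; apply: sumR_le => i; rewrite !inE => /andP [i0 _].
  case/orP: (fP i) => /eqP ->; [rewrite lH_c0 // | rewrite lH_c1 //]; lra.
have finj : forall (f : 'I_(k+1) -> eidx H),
    (forall i, (f i == c h0 i) || (f i == c h1 i)) -> {in [set: 'I_(k+1)] &, injective f}.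
  move=> f fP a b _ _ E.
  by case/orP: (fP a) => /eqP Ea; case/orP: (fP b) => /eqP Eb; rewrite Ea Eb in E;
    case: (c_inj E).
case: (boolP [forall i, (i != o0) ==> (c h0 i \in ES)]) => [/forallP allc | /forallP noall].
  have sub0 : c h0 @: [set: 'I_(k+1)] \subset ES.
    apply/subsetP => e /imsetP [i _ ->]; case: (eqVneq i o0) => [-> //|i0].
    by move/implyP: (allc i); apply.
  rewrite /sub_len; apply: Rle_trans _ (sumR_sub sub0 lH_ge0).
  rewrite (big_imset _ (finj (c h0) (fun i => ltac:(by rewrite eqxx)))) /=.
  rewrite (big_setD1 _ (in_setT o0)) /= lH_c00.
  have E1 : \big[Rplus/0%R]_(i in [set: 'I_(k+1)] :\ o0) lH (c h0 i) = (INR k * (3 * KR + 3))%R.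
    rewrite Ik -sumR_const; apply: eq_bigr => i; rewrite !inE => /andP [i0 _]; exact: lH_c0.
  rewrite E1 /Mb /KR; lra.
have [i0 i0ne i0E] : exists2 i0, i0 != o0 & c h0 i0 \notin ES.
  apply/exists_inP; apply/negP => /exists_inP hh; apply: noall => i; apply/implyP => ine.
  by apply/negPn/negP => cn; apply: hh; exists i.
have g1 : g i0 = c h1 i0.
  by move: (gP i0); rewrite i0ne /= => /andP [gE /orP [/eqP E | /eqP //]]; rewrite -E gE in i0E.
have c1E : c h1 i0 \in ES by rewrite -g1; case/andP: (gP i0).
pose Xs := inl h0 |: (leaf @: [set i | c h0 i \in ES]).
pose U := \bigcup_(z in Xs) B z.
have memU : forall v z, v \in B z -> (v \in U) = (z \in Xs).
  move=> v z vz; apply/bigcupP/idP => [[w wX vw] | zX]; last by exists z.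
  by rewrite (memB_uniq vz vw).
have leafX : forall i, (leaf i \in Xs) = (c h0 i \in ES).
  move=> i; rewrite !inE /=; apply/imsetP/idP => [[j]|]; last by exists i; rewrite ?inE.
  by rewrite inE => jE /leaf_inj ->.
have [u1 u1B u1V] : exists2 u1, u1 \in B (inl h1) & u1 \in VS.
  move/forallP: sub => /(_ (c h1 i0)); rewrite c1E /= => /andP [a b].
  case/orP: (Hc h1 i0) => /andP [x y].
    by exists (edge_at (c h1 i0)).1.
  by exists (edge_at (c h1 i0)).2.
have tU : t o0 \in U by rewrite (memU _ _ (Ht o0)) leafX c00.
have u1U : u1 \notin U.
  rewrite (memU _ _ u1B) !inE negb_or; apply/andP; split; first by [].
  by apply/negP => /imsetP [i _].
have [e eE cr] := cut_edge (cV _ _ (tV o0) u1V) tU u1U.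
have [x [y [lk kind]]] := elink e eE.
have [j [j0 [cj0 cj1]]] : exists j, j != o0 /\ c h0 j \in ES /\ c h1 j \in ES.
  have := cross_link lk cr.
  have hX : inl h0 \in Xs by rewrite !inE eqxx.
  have h1X : inl h1 \notin Xs.
    rewrite !inE negb_or; apply/andP; split; first by [].
    by apply/negP => /imsetP [i _].
  case: kind => [E | [[i' i0' E] | [[i' i0' E] | E]]]; last by rewrite E eqxx.
  - subst e; have [[-> ->]|[-> ->]] := link_uniq lk (Hc h0 o0);
      by rewrite hX leafX c00.
  - subst e; have [[-> ->]|[-> ->]] := link_uniq lk (Hc h0 i');
      by rewrite hX leafX eE.
  - subst e; have [[-> ->]|[-> ->]] := link_uniq lk (Hc h1 i');
      rewrite (negbTE h1X) leafX ?neqF ?Fneq => cE; by exists i'.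
pose g' i := if i == j then c h1 j else g i.
have g'P : forall i, (g' i == c h0 i) || (g' i == c h1 i).
  move=> i; rewrite /g'; case: (eqVneq i j) => [-> | _]; first by rewrite eqxx orbT.
  by case/andP: (gP i) => _ /orP [-> // | /andP [_ ->]]; rewrite orbT.
have g'0 : g' o0 = c h0 o0 by rewrite /g' eq_sym (negbTE j0).
have g'E : forall i, g' i \in ES.
  by move=> i; rewrite /g'; case: eqP => _ //; case/andP: (gP i).
have notin : c h0 j \notin g' @: [set: 'I_(k+1)].
  apply/negP => /imsetP [i _]; rewrite /g'; case: (eqVneq i j) => [_ /c_inj [] // | ij].
  by case/orP: (g'P i); rewrite /g' (negbTE ij) => /eqP -> /c_inj [] // _ ji; rewrite ji eqxx in ij.
have subD : c h0 j |: (g' @: [set: 'I_(k+1)]) \subset ES.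
  apply/subsetP => e'; case/setU1P => [-> // | /imsetP [i _ ->]]; exact: g'E.
rewrite /sub_len; apply: Rle_trans _ (sumR_sub subD lH_ge0).
rewrite (big_setU1 _ notin) /= (big_imset _ (finj g' g'P)) /= lH_c0 //.
apply: Rle_trans _ (Rplus_le_compat_l _ _ _ (gebound g' g'P g'0)); rewrite /Mb /KR; have := pos_INR k; nra.
Qed.


Definition nG := (nv H).+1.
Definition vG (v : 'I_(nv H)) : 'I_nG := widen_ord (leqnSn _) v.
Definition zG : 'I_nG := ord_max.
Definition edgesG : seq ('I_nG * 'I_nG) :=
  [seq (vG p.1, vG p.2) | p <- edges H] ++ [seq (vG (t i), zG) | i <- enum 'I_(k+1)].
Definition G := @Graph nG edgesG.
Definition sH := size (edges H).

Lemma size_edgesG : size (edges G) = sH + (k + 1).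
Proof. change (size edgesG = sH + (k + 1)); by rewrite /edgesG size_cat !size_map -enumT size_enum_ord. Qed.

Lemma emap_lt (e : eidx H) : e < size (edges G).
Proof. by rewrite size_edgesG; apply: leq_trans (ltn_ord e) (leq_addr _ _). Qed.
Definition emapG (e : eidx H) : eidx G := Ordinal (emap_lt e).

Lemma zedge_lt (i : 'I_(k+1)) : sH + i < size (edges G).
Proof. by rewrite size_edgesG ltn_add2l. Qed.
Definition zedge (i : 'I_(k+1)) : eidx G := Ordinal (zedge_lt i).

Lemma vG_inj : injective vG.
Proof. by move=> a b /(congr1 val) /= /val_inj. Qed.

Lemma vG_neq_z v : vG v != zG.
Proof. by rewrite -val_eqE /= neq_ltn ltn_ord. Qed.

Lemma edge_at_emap e : edge_at (emapG e) = (vG (edge_at e).1, vG (edge_at e).2).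
Proof.
rewrite /edge_at !(tnth_nth (zG, zG)) (tnth_nth (t o0, t o0)) /= /edgesG.
rewrite nth_cat size_map ltn_ord.
by rewrite (nth_map (t o0, t o0)).
Qed.

Lemma edge_at_z i : edge_at (zedge i) = (vG (t i), zG).
Proof.
rewrite /edge_at (tnth_nth (zG, zG)) /= /edgesG.
rewrite nth_cat size_map -/sH ltnNge leq_addr /= addKn.
by rewrite (nth_map o0) ?size_enum_ord ?ltn_ord // nth_ord_enum.
Qed.

Lemma eidxG_cases (e : eidx G) : (exists e0, e = emapG e0) \/ (exists i, e = zedge i).
Proof.
case: (ltnP e sH) => [lt | ge].
  by left; exists (Ordinal lt); apply: val_inj.
right; have lt : e - sH < k + 1.
  by rewrite ltn_subLR // -size_edgesG ltn_ord.
by exists (Ordinal lt); apply: val_inj; rewrite /= subnKC.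
Qed.

Lemma emapG_inj : injective emapG.
Proof. by move=> a b /(congr1 val) /= /val_inj. Qed.

Lemma zedge_inj : injective zedge.
Proof. by move=> a b /(congr1 val) /= /eqP; rewrite eqn_add2l => /eqP /val_inj. Qed.

Lemma emap_neq_z e i : emapG e != zedge i.
Proof. by rewrite -val_eqE /= neq_ltn ltn_addr. Qed.

Definition lG (e : eidx G) : R :=
  match (insub (val e) : option (eidx H)) with
  | Some e0 => lH e0
  | None => rr (insubd o0 (val e - sH))
  end.

Lemma lG_emap e : lG (emapG e) = lH e.
Proof. by rewrite /lG /= valK. Qed.

Lemma lG_z i : lG (zedge i) = rr i.
Proof.
rewrite /lG /= insubN; last by rewrite -ltnNge leq_addr.
by rewrite addKn valKd.
Qed.

Lemma rr_pos i : (0 < rr i)%R.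
Proof. by have := KR2; rewrite /rr; case: ifP => _; lra. Qed.

Lemma lG_pos e : (0 < lG e)%R.
Proof.
case: (eidxG_cases e) => [[e0 ->] | [i ->]]; rewrite ?lG_emap ?lG_z.
  exact: lH_pos. exact: rr_pos.
Qed.

Lemma lG_ge0 e : (0 <= lG e)%R.
Proof. by have := lG_pos e; lra. Qed.

Lemma loopless_G : loopless G.
Proof.
rewrite /loopless /= /edgesG all_cat; apply/andP; split.
  rewrite all_map; apply/allP => p pH /=.
  move/allP: Hloop => /(_ p pH); apply: contra => /eqP /vG_inj ->; by [].
rewrite all_map; apply/allP => i _ /=; exact: vG_neq_z.
Qed.

Definition phi : embedding H G.
Proof.
apply: (@Embedding H G vG emapG vG_inj emapG_inj).
by move=> e; left; apply: edge_at_emap.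
Defined.


Lemma sub_adj_map (E0 : {set eidx H}) a b :
  sub_adj E0 a b -> sub_adj (emapG @: E0) (vG a) (vG b).
Proof.
case/sub_adjP => e eE H0; apply/sub_adjP; exists (emapG e); first exact: imset_f.
by rewrite edge_at_emap; case: H0 => ->; [left | right].
Qed.

Lemma sub_adj_pull (E0 : {set eidx H}) u w :
  sub_adj (emapG @: E0) (vG u) w -> exists2 u', w = vG u' & sub_adj E0 u u'.
Proof.
case/sub_adjP => e /imsetP [e0 e0E ->]; rewrite edge_at_emap => -[] [E1 E2].
  exists (edge_at e0).2 => //; apply/sub_adjP; exists e0 => //; left.
  by rewrite -(val_inj E1); case: (edge_at e0).
exists (edge_at e0).1 => //; apply/sub_adjP; exists e0 => //; right.
by rewrite -(val_inj E2); case: (edge_at e0).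
Qed.

Lemma connect_pull (E0 : {set eidx H}) x y :
  connect (sub_adj (emapG @: E0)) (vG x) (vG y) -> connect (sub_adj E0) x y.
Proof.
move=> /connectP [p pP E]; elim: p x pP E => [|w p IH] x /=.
  by move=> _ /vG_inj ->; apply: connect0.
move=> /andP [xw pP] E; have [u' wu xu] := sub_adj_pull xw; subst w.
apply: connect_trans (connect1 xu) (IH _ pP E).
Qed.

Lemma valid_HG A (S : {set 'I_(nv H)} * {set eidx H}) : validS A S ->
  @validS G (vG @: A) (vG @: S.1, emapG @: S.2) /\
  sub_len lG (emapG @: S.2) = sub_len (fun e => lG (emapG e)) S.2.
Proof.
case: S => VS ES /and3P [sub /andP [ne conn] AV] /=; split; last first.
  by rewrite /sub_len big_imset //; move=> a b _ _; apply: emapG_inj.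
apply/and3P; split => /=.
- apply/forallP => e; apply/implyP => /imsetP [e0 e0E ->]; rewrite edge_at_emap /=.
  move/forallP: sub => /(_ e0); rewrite e0E /= => /andP [a b].
  by rewrite !imset_f.
- apply/andP; split.
    by case/set0Pn: ne => v vV; apply/set0Pn; exists (vG v); apply: imset_f.
  apply/forallP => x; apply/implyP => /imsetP [x0 x0V ->].
  apply/forallP => y; apply/implyP => /imsetP [y0 y0V ->].
  apply: connect_homo; first exact: sub_adj_map.
  by move/forallP: conn => /(_ x0); rewrite x0V /= => /forallP /(_ y0); rewrite y0V.
- exact: imsetS.
Qed.

Lemma reach (ES : {set eidx G}) a :
  connect (sub_adj ES) (vG a) zG ->
  exists i, (zedge i \in ES) && connect (sub_adj [set e | emapG e \in ES]) a (t i).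
Proof.
move=> /connectP [p pP E]; elim: p a pP E => [|w p IH] a /=.
  by move=> _ E; move: (vG_neq_z a); rewrite E eqxx.
move=> /andP [aw pP] E.
case/sub_adjP: aw => e eE H0.
case: (eidxG_cases e) => [[e0 Ee] | [i Ee]]; subst e.
  have aw : sub_adj (emapG @: [set e | emapG e \in ES]) (vG a) w.
    apply/sub_adjP; exists (emapG e0) => //; by apply: imset_f; rewrite inE.
  have [u' wu au] := sub_adj_pull aw; subst w.
  have [i /andP [iE ci]] := IH _ pP E.
  by exists i; rewrite iE /=; apply: connect_trans (connect1 au) ci.
move: H0; rewrite edge_at_z => -[] [E1 E2].
  exists i; rewrite eE /=.
  have -> : a = t i by apply: val_inj; symmetry; exact: E1.
  exact: connect0.
by have := ltn_ord a; rewrite -E2 /= ltnn.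
Qed.


Lemma valid_GH (A : {set 'I_(nv H)}) (S : {set 'I_(nv G)} * {set eidx G}) : #|A| <= k -> @validS G (vG @: A) S ->
  exists S' : {set 'I_(nv H)} * {set eidx H},
    validS A S' /\ (sub_len (fun e => lG (emapG e)) S'.2 <= sub_len lG S.2)%R.
Proof.
case: S => VS ES Ak /and3P [sub /andP [ne conn] AV] /=.
pose ESH := [set e | emapG e \in ES].
pose VSH := [set v | vG v \in VS].
have cG : forall x y, x \in VS -> y \in VS -> connect (sub_adj ES) x y.
  move=> x y xV yV; move/forallP: conn => /(_ x); rewrite xV /= => /forallP /(_ y).
  by rewrite yV.
have subH : is_subgraph VSH ESH.
  apply/forallP => e; apply/implyP; rewrite inE => eE.
  move/forallP: sub => /(_ (emapG e)); rewrite eE edge_at_emap /= => /andP [a b].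
  by rewrite !inE a b.
have lenH : sub_len (fun e => lG (emapG e)) ESH = \big[Rplus/0%R]_(e in emapG @: ESH) lG e.
  by rewrite /sub_len big_imset //; move=> a b _ _; apply: emapG_inj.
have subES : emapG @: ESH \subset ES.
  by apply/subsetP => e /imsetP [e0]; rewrite inE => ? ->.
have AVH : forall a, a \in A -> a \in VSH.
  by move=> a aA; rewrite inE; apply: (subsetP AV); apply: imset_f.
case: (eqVneq A set0) => [A0 | An0].
  exists ([set t o0], set0); split.
    apply/and3P; split => /=.
    - by apply/forallP => e; rewrite inE.
    - apply/andP; split; first by apply/set0Pn; exists (t o0); rewrite inE.
      apply/forallP => x; apply/implyP; rewrite inE => /eqP ->.
      apply/forallP => y; apply/implyP; rewrite inE => /eqP ->; exact: connect0.
    - by rewrite A0 sub0set.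
  rewrite /sub_len big_set0 /=; apply: sumR_ge0 => e _; exact: lG_ge0.
have [a0 a0A] := set0Pn _ An0.
case: (boolP (zG \in VS)) => zV; last first.
  have ESsub : ES \subset emapG @: ESH.
    apply/subsetP => e eE; case: (eidxG_cases e) => [[e0 Ee] | [i Ee]]; subst e.
      by apply: imset_f; rewrite inE.
    move/forallP: sub => /(_ (zedge i)); rewrite eE edge_at_z /= => /andP [_ zV'].
    by rewrite zV' in zV.
  exists (VSH, ESH); split.
    apply/and3P; split => //=.
    - apply/andP; split; first by apply/set0Pn; exists a0; apply: AVH.
      apply/forallP => x; apply/implyP; rewrite inE => xV.
      apply/forallP => y; apply/implyP; rewrite inE => yV.
      apply: connect_pull; apply: connect_mono ESsub (cG _ _ xV yV).
    - by apply/subsetP => a aA; apply: AVH.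
  rewrite /= lenH; apply: sumR_sub subES lG_ge0.
have rch : forall a, a \in A -> exists i, (zedge i \in ES) && connect (sub_adj ESH) a (t i).
  move=> a aA; apply: reach; apply: cG zV; apply: (subsetP AV); exact: imset_f.
pose sel a := odflt o0 [pick i | (zedge i \in ES) && connect (sub_adj ESH) a (t i)].
have selP : forall a, a \in A -> (zedge (sel a) \in ES) && connect (sub_adj ESH) a (t (sel a)).
  move=> a aA; rewrite /sel; case: pickP => [i Pi // | none].
  by have [i Pi] := rch a aA; rewrite none in Pi.
pose N := sel @: A.
have N0 : N != set0 by apply/set0Pn; exists (sel a0); apply: imset_f.
have Nk : #|N| <= k by apply: leq_trans (leq_imset_card _ _) Ak.
have [[VQ EQ] [/and3P [subQ /andP [neQ connQ] tNQ] lenQ]] := upper N0 Nk.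
rewrite /= in subQ connQ tNQ lenQ.
have inQ : forall a, a \in A -> t (sel a) \in VQ.
  by move=> a aA; apply: (subsetP tNQ); apply: imset_f; apply: imset_f.
pose V0 := VSH :|: VQ.
pose E0 := ESH :|: EQ.
have sub0 : is_subgraph V0 E0.
  apply/forallP => e; apply/implyP; rewrite inE => /orP [eE | eE].
    move/forallP: subH => /(_ e); rewrite eE /= => /andP [a b].
    by rewrite !in_setU a b.
  move/forallP: subQ => /(_ e); rewrite eE /= => /andP [a b].
  by rewrite !in_setU a b !orbT.
pose q0 := t (sel a0).
have q0V0 : q0 \in V0 by rewrite inE inQ ?orbT.
have := component_valid sub0 q0V0 => /= -[subC [connC q0C]].
set V' := [set x in V0 | _] in subC connC q0C.
set E' := [set e in E0 | _] in subC connC.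
have cQ : forall x y, x \in VQ -> y \in VQ -> connect (sub_adj EQ) x y.
  move=> x y xV yV; move/forallP: connQ => /(_ x); rewrite xV /= => /forallP /(_ y).
  by rewrite yV.
exists (V', E'); split.
  apply/and3P; split => //=.
  apply/subsetP => a aA; rewrite inE; apply/andP; split.
    by rewrite inE AVH.
  apply: (@connect_trans _ _ (t (sel a))).
    apply: connect_mono (cQ _ _ (inQ _ a0A) (inQ _ aA)); exact: subsetUr.
  rewrite connect_symE; apply: connect_mono (_ : connect (sub_adj ESH) a (t (sel a))).
    exact: subsetUl.
  by case/andP: (selP a aA).
rewrite /=.
have E'sub : E' \subset E0 by apply/subsetP => e; rewrite inE => /andP [].
apply: Rle_trans (sumR_sub E'sub (fun e => lG_ge0 (emapG e))) _.
apply: Rle_trans (sumR_union _ _ (fun e => lG_ge0 (emapG e))) _.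
have QQ : (\big[Rplus/0%R]_(e in EQ) lG (emapG e) <= \big[Rplus/0%R]_(i in N) rr i)%R.
  apply: Rle_trans _ lenQ; rewrite /sub_len; apply: sumR_le => e _; rewrite lG_emap; lra.
apply: Rle_trans (Rplus_le_compat_l _ _ _ QQ) _.
have NE : zedge @: N \subset ES.
  apply/subsetP => e /imsetP [i /imsetP [a aA ->] ->]; by case/andP: (selP a aA).
have disj : [disjoint emapG @: ESH & zedge @: N].
  rewrite -setI_eq0; apply/eqP/setP => e; rewrite !inE.
  apply/negP => /andP [/imsetP [e0 _ ->] /imsetP [i _ /eqP]]; by rewrite (negbTE (emap_neq_z _ _)).
have -> : \big[Rplus/0%R]_(i in N) rr i = \big[Rplus/0%R]_(e in zedge @: N) lG e.
  rewrite [RHS]big_imset /=; last by move=> a b _ _; apply: zedge_inj.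
  by apply: eq_bigr => i _; rewrite lG_z.
have -> : \big[Rplus/0%R]_(e in ESH) lG (emapG e) = \big[Rplus/0%R]_(e in emapG @: ESH) lG e.
  exact: lenH.
rewrite -sumR_disj //; apply: sumR_sub lG_ge0.
by rewrite subUset subES NE.
Qed.


Lemma kgeo : k_geodesic phi lG k.
Proof.
move=> A Ak; rewrite /=; apply: sd_eq.
  move=> S1 V1; have [V2 E] := valid_HG V1.
  by exists (vG @: S1.1, emapG @: S1.2); split => //; rewrite /= E; apply: Rle_refl.
move=> S2 V2; exact: valid_GH Ak V2.
Qed.

Lemma cardk : #|[set: 'I_(k+1)] :\ o0| = k.
Proof.
have := cardsD1 o0 [set: 'I_(k+1)]; rewrite cardsT card_ord inE /= => E.
apply/eqP; rewrite -(eqn_add2l 1) -E; by rewrite addnC.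
Qed.

Lemma star_valid :
  @validS G (vG @: (t @: setT)) (zG |: (vG @: (t @: setT)), zedge @: setT).
Proof.
apply/and3P; split => /=.
- apply/forallP => e; apply/implyP => /imsetP [i _ ->]; rewrite edge_at_z /=.
  by rewrite setU11 in_setU1 !imset_f ?orbT ?inE.
- have adjz : forall i, sub_adj (zedge @: setT) (vG (t i)) zG.
    move=> i; apply/sub_adjP; exists (zedge i); [exact: imset_f | left; exact: edge_at_z].
  have cz : forall x, x \in zG |: (vG @: (t @: setT)) -> connect (sub_adj (zedge @: setT)) x zG.
    move=> x /setU1P [-> | /imsetP [v /imsetP [i _ ->] ->]]; first exact: connect0.
    exact: connect1.
  apply/andP; split; first by apply/set0Pn; exists zG; exact: setU11.
  apply/forallP => x; apply/implyP => xV; apply/forallP => y; apply/implyP => yV.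
  apply: (@connect_trans _ _ zG); first exact: cz.
  by rewrite (@connect_symE G); apply: cz.
- exact: subsetUr.
Qed.

Lemma star_len : sub_len lG (zedge @: setT) = (3 * KR * KR + 3 * KR)%R.
Proof.
rewrite /sub_len big_imset /=; last by move=> a b _ _; apply: zedge_inj.
rewrite (eq_bigr rr); last by move=> i _; apply: lG_z.
rewrite (big_setD1 _ (in_setT o0)) /=.
have E : \big[Rplus/0%R]_(i in [set: 'I_(k+1)] :\ o0) rr i = (INR #|[set: 'I_(k+1)] :\ o0| * (3 * KR + 1))%R.
  rewrite -sumR_const; apply: eq_bigr => i; rewrite !inE => /andP [i0 _]; exact: rr_ne0.
rewrite E cardk {1}/rr eqxx -/KR; lra.
Qed.

Lemma not_Hk : ~ in_Hk k H.
Proof.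
move=> Hin.
have fg := Hin G phi lG loopless_G lG_pos kgeo.
have := fg (k+1) (t @: setT).
rewrite /=.
have cardA : #|t @: [set: 'I_(k+1)]| <= k + 1.
  by apply: leq_trans (leq_imset_card _ _) _; rewrite cardsT card_ord.
move=> /(_ cardA).
have [dG [EG leG]] := sd_le lG star_valid.
rewrite /= in EG leG; rewrite EG star_len in leG *.
move=> EH; have [SH [VH lenH]] := sd_attained EH.
have := lower VH.
have -> : sub_len lH SH.2 = dG.
  by rewrite lenH /sub_len; apply: eq_bigr => e _; rewrite lG_emap.
rewrite /Mb; lra.
Qed.

End Constr.

Theorem corollary6p8 (k : nat) (H : graph) :
  2 <= k -> loopless H -> in_Hk k H -> ~ has_minor (@K2_adj (k + 2)) H.
Proof.
move=> k2 Hl Hin [B [Bconn [Bdisj Badj]]].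
have exc : forall h i, exists e, link (B (inl h)) (B (leaf i)) e.
  move=> h i; have [e He] := Badj (inl h) (leaf i) isT; exists e.
  by rewrite /link; case: He => [[a b]|[a b]]; rewrite a b ?orbT.
pose c h i := xchoose (exc h i).
have Hc : forall h i, link (B (inl h)) (B (leaf i)) (c h i).
  by move=> h i; exact: (xchooseP (exc h i)).
have ext : forall i : 'I_(k+1), exists v, v \in B (leaf i).
  by move=> i; have /andP [/set0Pn [v vB] _] := Bconn (leaf i); exists v.
pose t i := xchoose (ext i).
have Ht : forall i, t i \in B (leaf i) by move=> i; exact: (xchooseP (ext i)).
exact: (not_Hk k2 Hl Bconn Bdisj Hc Ht Hin).
Qed.
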